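(* Let $H$ be a finite normal subgroup of a group $G$ such that the center of $H$ is trivial. If $G/H$ is a Jordan group, then $G$ is a Jordan group and $J_G\leqslant |\mathrm{Aut}(H)|\, J_{G/H}^{|\mathrm{Aut}(H)|}$.
   Context: A group $G$ is called Jordan if there exists a positive integer $d$ such that every finite subgroup $K$ of $G$ contains a normal abelian subgroup of index at most $d$ in $K$; the minimal such $d$ is the Jordan constant $J_G$. *)

(* Defs.v *)
From Stdlib Require Import Arith List.
Import ListNotations.

Record Group := {
  carrier :> Type;
  gmul : carrier -> carrier -> carrier;
  gone : carrier;
  ginv : carrier -> carrier;
  gmulA : forall x y z, gmul x (gmul y z) = gmul (gmul x y) z;
  gmul1l : forall x, gmul gone x = x;
  gmul1r : forall x, gmul x gone = x;
  gmulVl : forall x, gmul (ginv x) x = gone;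
  gmulVr : forall x, gmul x (ginv x) = gone
}.

Arguments gmul {g}.
Arguments gone {g}.
Arguments ginv {g}.

Definition card {T : Type} (P : T -> Prop) (n : nat) : Prop :=
  exists s : list T, NoDup s /\ length s = n /\ (forall x, P x <-> In x s).

Definition finite_set {T : Type} (P : T -> Prop) : Prop := exists n, card P n.

Definition subgroup {G : Group} (K : G -> Prop) : Prop :=
  K gone /\ (forall x y, K x -> K y -> K (gmul x y)) /\ (forall x, K x -> K (ginv x)).

Definition finite_subgroup {G : Group} (K : G -> Prop) : Prop :=
  subgroup K /\ finite_set K.

Definition normal_in {G : Group} (A K : G -> Prop) : Prop :=
  subgroup A /\ (forall x, A x -> K x) /\
  (forall k a, K k -> A a -> A (gmul (gmul k a) (ginv k))).

Definition abelian_set {G : Group} (A : G -> Prop) : Prop :=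
  forall a b, A a -> A b -> gmul a b = gmul b a.

Definition index_le {G : Group} (K A : G -> Prop) (d : nat) : Prop :=
  exists nK nA, card K nK /\ card A nA /\ nK / nA <= d.

Definition jordan_with (G : Group) (d : nat) : Prop :=
  0 < d /\
  forall K : G -> Prop, finite_subgroup K ->
    exists A : G -> Prop, normal_in A K /\ abelian_set A /\ index_le K A d.

Definition jordan (G : Group) : Prop := exists d, jordan_with G d.

Definition jordan_constant (G : Group) (d : nat) : Prop :=
  jordan_with G d /\ (forall d', jordan_with G d' -> d <= d').

Definition hom {G Q : Group} (f : G -> Q) : Prop :=
  forall x y, f (gmul x y) = gmul (f x) (f y).

(* Q is (isomorphic to) G/H via pi: pi is a surjective hom with kernel H *)
Definition quotient_map {G Q : Group} (H : G -> Prop) (pi : G -> Q) : Prop :=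
  hom pi /\ (forall q : Q, exists g, pi g = q) /\ (forall g, pi g = gone <-> H g).

Definition trivial_center {G : Group} (H : G -> Prop) : Prop :=
  forall z, H z -> (forall h, H h -> gmul z h = gmul h z) -> z = gone.

(* automorphisms of the subgroup H, represented by maps G -> G, considered
   up to agreement on H *)
Definition automorphism_of {G : Group} (H : G -> Prop) (f : G -> G) : Prop :=
  (forall x, H x -> H (f x)) /\
  (forall y, H y -> exists x, H x /\ f x = y) /\
  (forall x y, H x -> H y -> f x = f y -> x = y) /\
  (forall x y, H x -> H y -> f (gmul x y) = gmul (f x) (f y)).

Definition agree_on {G : Group} (H : G -> Prop) (f g : G -> G) : Prop :=
  forall x, H x -> f x = g x.

Definition aut_card {G : Group} (H : G -> Prop) (n : nat) : Prop :=
  exists ls : list (G -> G),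
    length ls = n /\
    Forall (automorphism_of H) ls /\
    ForallOrdPairs (fun f g => ~ agree_on H f g) ls /\
    (forall f, automorphism_of H f -> exists g, In g ls /\ agree_on H f g).

(* Main.v *)
Require Import Defs.
From Stdlib Require Import Arith List Lia ClassicalEpsilon Classical.
Import ListNotations.

Definition dec (P : Prop) : bool := if excluded_middle_informative P then true else false.
Lemma decP P : dec P = true <-> P.
Proof. unfold dec; destruct (excluded_middle_informative P); split; intros; auto; try discriminate; contradiction. Qed.

Lemma L1 {G : Group} (x y : G) : gmul (ginv x) (gmul x y) = y.
Proof. rewrite gmulA, gmulVl, gmul1l; reflexivity. Qed.
Lemma L2 {G : Group} (x y : G) : gmul x (gmul (ginv x) y) = y.
Proof. rewrite gmulA, gmulVr, gmul1l; reflexivity. Qed.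
Lemma inv_unique {G : Group} (x y : G) : gmul x y = gone -> y = ginv x.
Proof. intro E. rewrite <- (L1 x y), E, gmul1r. reflexivity. Qed.
Lemma inv_inv {G : Group} (x : G) : ginv (ginv x) = x.
Proof. symmetry; apply inv_unique; apply gmulVl. Qed.
Lemma inv_mul {G : Group} (x y : G) : ginv (gmul x y) = gmul (ginv y) (ginv x).
Proof. symmetry; apply inv_unique. rewrite <- gmulA, (gmulA _ y), gmulVr, gmul1l, gmulVr. reflexivity. Qed.
Lemma inv_one {G : Group} : ginv (@gone G) = gone.
Proof. symmetry; apply inv_unique; apply gmul1l. Qed.

Hint Rewrite <- gmulA : gr.
Hint Rewrite gmul1l gmul1r gmulVl gmulVr @L1 @L2 @inv_inv @inv_mul @inv_one : gr.
Ltac gs := autorewrite with gr in *; try reflexivity; try assumption; try (symmetry; assumption).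

Lemma hom1 {G Q : Group} (f : G -> Q) : hom f -> f gone = gone.
Proof. intro Hf. assert (E : f gone = gmul (f gone) (f gone)) by (rewrite <- Hf, gmul1l; reflexivity).
  rewrite <- (L1 (f gone) (f gone)), <- E, gmulVl. reflexivity. Qed.
Lemma homV {G Q : Group} (f : G -> Q) x : hom f -> f (ginv x) = ginv (f x).
Proof. intro Hf. apply inv_unique. rewrite <- Hf, gmulVr. apply hom1; auto. Qed.

Lemma card_unique {T} (P : T -> Prop) n m : card P n -> card P m -> n = m.
Proof.
  intros [s [Hs [Hl Hm]]] [t [Ht [Htl Htm]]]. subst.
  apply Nat.le_antisymm; apply NoDup_incl_length; auto; intros x Hx; firstorder.
Qed.
Lemma card_ext {T} (P S : T -> Prop) n : (forall x, P x <-> S x) -> card P n -> card S n.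
Proof. intros E [s [Hs [Hl Hm]]]. exists s; split; auto; split; auto. intro x; rewrite <- E; auto. Qed.

Lemma card_sub {T} (P S : T -> Prop) n : card P n -> (forall x, S x -> P x) -> exists m, card S m.
Proof.
  intros [s [Hs [_ Hm]]] HSP.
  exists (length (filter (fun x => dec (S x)) s)). exists (filter (fun x => dec (S x)) s).
  split; [apply NoDup_filter; auto|split; [reflexivity|]].
  intro x; rewrite filter_In, decP. split; [intros HS; split; [apply Hm, HSP, HS | exact HS] | tauto].
Qed.

Lemma inj_card {T} (l : list T) (f : T -> T) (P : T -> Prop) n :
  NoDup l -> (forall x, In x l -> P (f x)) ->
  (forall x y, In x l -> In y l -> f x = f y -> x = y) -> card P n -> length l <= n.
Proof.
  intros Hl HP Hinj [s [Hs [Hn Hm]]]. subst n.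
  rewrite <- (length_map f l). apply NoDup_incl_length.
  - apply NoDup_map_NoDup_ForallPairs; [|auto]. intros x y Hx Hy; apply Hinj; auto.
  - intros y Hy. apply in_map_iff in Hy. destruct Hy as [x [<- Hx]]. apply Hm, HP, Hx.
Qed.

Lemma filter_split {T} (f : T -> bool) l : length l = length (filter f l) + length (filter (fun x => negb (f x)) l).
Proof. induction l; simpl; auto. destruct (f a); simpl; lia. Qed.

Lemma part {T U} (L : list U) (R : T -> U -> Prop) c : forall (s : list T),
  NoDup s -> (forall x, In x s -> exists y, In y L /\ R x y) ->
  (forall y, In y L -> forall s', NoDup s' -> (forall x, In x s' -> In x s /\ R x y) -> length s' <= c) ->
  length s <= length L * c.
Proof.
  induction L as [|y L IH]; intros s Hs Hcov Hfib.
  - destruct s as [|x s]; [simpl; lia|]. destruct (Hcov x (or_introl eq_refl)) as [y [[] _]].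
  - rewrite (filter_split (fun x => dec (R x y)) s). simpl.
    assert (H1 : length (filter (fun x => dec (R x y)) s) <= c).
    { apply (Hfib y (or_introl eq_refl)). apply NoDup_filter; auto.
      intros x Hx. apply filter_In in Hx. destruct Hx as [Hx Hd]. apply (proj1 (decP _)) in Hd. split; assumption. }
    assert (H2 : length (filter (fun x => negb (dec (R x y))) s) <= length L * c).
    { apply IH. apply NoDup_filter; auto.
      - intros x Hx. apply filter_In in Hx. destruct Hx as [Hx Hd].
        destruct (Hcov x Hx) as [y' [[<-|Hy'] HR]].
        + apply (proj2 (decP _)) in HR. rewrite HR in Hd. discriminate.
        + eauto.
      - intros y' Hy' s' Hs' Hsub. apply (Hfib y' (or_intror Hy') s' Hs').
        intros x Hx. destruct (Hsub x Hx) as [Hx1 HR]. apply filter_In in Hx1. tauto. }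
    lia.
Qed.

Lemma lagrange {G : Group} (B : G -> Prop) (lB : list G) :
  subgroup B -> NoDup lB -> (forall x, B x <-> In x lB) ->
  forall n (s : list G), length s <= n -> NoDup s -> (forall x b, In x s -> B b -> In (gmul x b) s) ->
  exists r : list G, length s = length lB * length r /\
    (forall x, In x s -> exists y, In y r /\ B (gmul (ginv y) x)).
Proof.
  intros [HB1 [HBm HBi]] HlB HBl. induction n as [|n IH]; intros s Hlen Hs Hcl.
  - destruct s; simpl in Hlen; [|lia]. exists []. simpl. split; [lia| intros x []].
  - destruct s as [|x0 s0] eqn:Es.
    ++ exists []. simpl; split; [lia| intros x []].
    ++ rewrite <- Es in *.
      set (p := fun x => dec (B (gmul (ginv x0) x))).
      assert (Hx0 : In x0 s) by (rewrite Es; left; auto).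
      assert (E1 : length (filter p s) = length lB).
      { transitivity (length (map (gmul x0) lB)); [|apply length_map].
        apply Nat.le_antisymm; apply NoDup_incl_length.
        - apply NoDup_filter; auto.
        - intros x Hx. apply filter_In in Hx. destruct Hx as [_ Hp]. apply (proj1 (decP _)) in Hp.
          apply in_map_iff. exists (gmul (ginv x0) x). split; [gs|apply HBl; auto].
        - apply NoDup_map_NoDup_ForallPairs; [|auto]. intros u v _ _ Huv.
          apply (f_equal (gmul (ginv x0))) in Huv. gs.
        - intros x Hx. apply in_map_iff in Hx. destruct Hx as [b [<- Hb]]. apply filter_In. split.
          + apply Hcl; auto. apply HBl; auto.
          + apply (proj2 (decP _)). gs. apply HBl; auto. }
      assert (Hpos : 0 < length lB).
      { destruct lB; simpl; [|lia]. apply HBl in HB1. destruct HB1. }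
      set (s' := filter (fun x => negb (p x)) s).
      assert (E2 : length s = length lB + length s').
      { rewrite (filter_split p s). rewrite E1. reflexivity. }
      destruct (IH s') as [r' [Hr'1 Hr'2]].
      + clearbody s' p. lia.
      + apply NoDup_filter; auto.
      + intros x b Hx Hb. unfold s' in *. apply filter_In in Hx. destruct Hx as [Hx Hp].
        apply filter_In. split; [apply Hcl; auto|].
        destruct (p (gmul x b)) eqn:Hpb; auto. unfold p in Hpb. apply (proj1 (decP _)) in Hpb.
        assert (B (gmul (gmul (ginv x0) (gmul x b)) (ginv b))) by (apply HBm; auto).
        gs. unfold p in Hp. assert (dec (B (gmul (ginv x0) x)) = true) by (apply (proj2 (decP _)); auto).
        rewrite H0 in Hp. discriminate.
      + exists (x0 :: r'). split.
        * simpl. rewrite E2, Hr'1. lia.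
        * intros x Hx. destruct (p x) eqn:Hp.
          -- exists x0. split; [left; auto|]. exact (proj1 (decP _) Hp).
          -- assert (In x s') by (apply filter_In; split; auto; rewrite Hp; auto).
             destruct (Hr'2 x H) as [y [Hy HB]]. exists y; split; [right|]; auto.
Qed.

Lemma jordan_main (G Q : Group) (H : G -> Prop) (pi : G -> Q) (a JQ : nat) :
  finite_subgroup H -> normal_in H (fun _ => True) -> trivial_center H ->
  quotient_map H pi -> aut_card H a -> jordan_with Q JQ ->
  jordan_with G (a * Nat.pow JQ a).
Proof.
  intros HHf [HHs [_ Hnorm]] HZ [Hhom [_ Hker]] [ls [Hla [Hlsaut [_ Hlscomp]]]] [HJQ HJ].
  set (C := fun x : G => forall h, H h -> gmul x h = gmul h x).
  assert (pi1 : pi gone = gone) by (apply hom1; auto).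
  assert (piV : forall x, pi (ginv x) = ginv (pi x)) by (intros; apply homV; auto).
  assert (Cmul : forall x y, C x -> C y -> C (gmul x y)).
  { intros x y Hx Hy h Hh. rewrite <- gmulA, Hy, gmulA, Hx, <- gmulA; auto. }
  assert (Cinv : forall x, C x -> C (ginv x)).
  { intros x Hx h Hh.
    assert (E : gmul (ginv x) (gmul (gmul x h) (ginv x)) = gmul (ginv x) (gmul (gmul h x) (ginv x)))
      by (rewrite Hx; auto).
    gs. }
  assert (Cconj : forall k x, C x -> C (gmul (gmul k x) (ginv k))).
  { intros k x Hx h Hh.
    assert (Hh' : H (gmul (gmul (ginv k) h) k)).
    { pose proof (Hnorm (ginv k) h I Hh) as E. rewrite inv_inv in E. exact E. }
    pose proof (Hx _ Hh') as E.
    apply (f_equal (fun z => gmul (gmul k z) (ginv k))) in E. gs. }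
  assert (C1 : C gone) by (intros h _; rewrite gmul1l, gmul1r; auto).
  assert (Cinj : forall x y, C x -> C y -> pi x = pi y -> x = y).
  { intros x y Hx Hy E.
    assert (E1 : gmul (ginv x) y = gone).
    { apply HZ.
      - apply Hker. rewrite Hhom, piV, E, gmulVl; auto.
      - apply Cmul; auto. }
    rewrite <- (L2 x y), E1, gmul1r; auto. }
  assert (agreeC : forall k k', (forall h, H h -> gmul (gmul k h) (ginv k) = gmul (gmul k' h) (ginv k')) ->
                   C (gmul (ginv k') k)).
  { intros k k' Hkk h Hh. pose proof (Hkk h Hh) as E.
    apply (f_equal (fun z => gmul (gmul (ginv k') z) k)) in E. gs. }
  assert (conj_aut : forall k, automorphism_of H (fun x => gmul (gmul k x) (ginv k))).
  { intro k. split; [|split; [|split]].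
    - intros x Hx. apply Hnorm; auto.
    - intros y Hy. exists (gmul (gmul (ginv k) y) k). split.
      + pose proof (Hnorm (ginv k) y I Hy) as E. rewrite inv_inv in E. exact E.
      + gs.
    - intros x y _ _ E. apply (f_equal (fun z => gmul (gmul (ginv k) z) k)) in E. gs.
    - intros x y _ _. gs. }
  destruct HHs as [HH1 [HHm HHi]].
  split.
  {
    assert (Hid : automorphism_of H (fun x => x)).
    { split; [auto|split; [|split]]; eauto. }
    destruct (Hlscomp _ Hid) as [g [Hg _]].
    destruct ls; [destruct Hg|]. simpl in Hla.
    assert (JQ ^ a <> 0) by (apply Nat.pow_nonzero; lia). nia. }
  intros K [[HK1 [HKm HKi]] [nK HnK]].
  assert (Hks : forall ls0 : list (G -> G), exists ks, length ks <= length ls0 /\ (forall k', In k' ks -> K k') /\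
     (forall g, In g ls0 -> (exists k, K k /\ agree_on H g (fun x => gmul (gmul k x) (ginv k))) ->
        exists k', In k' ks /\ agree_on H g (fun x => gmul (gmul k' x) (ginv k')))).
  { induction ls0 as [|g ls0 IH].
    - exists []. simpl. repeat split; auto; intros g [].
    - destruct IH as [ks [Hl [HK Hc]]].
      destruct (classic (exists k, K k /\ agree_on H g (fun x => gmul (gmul k x) (ginv k)))) as [[k [Hk Ha]]|Hn].
      + exists (k :: ks). simpl. split; [lia|split].
        * intros k' [<-|Hk']; auto.
        * intros g' [<-|Hg'] Hex; [exists k; auto|].
          destruct (Hc g' Hg' Hex) as [k' [? ?]]; exists k'; auto.
      + exists ks. simpl. split; [lia|split; auto].
        intros g' [<-|Hg'] Hex; [contradiction|auto]. }
  destruct (Hks ls) as [ks [Hksl [HksK Hksc]]].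
  assert (Cover : forall k, K k -> exists k', In k' ks /\ C (gmul (ginv k') k)).
  { intros k Hk. destruct (Hlscomp _ (conj_aut k)) as [g [Hg Hag]].
    destruct (Hksc g Hg) as [k' [Hk' Hag']].
    { exists k. split; auto. intros x Hx. symmetry; apply Hag; auto. }
    exists k'. split; auto. apply agreeC. intros h Hh. rewrite Hag, Hag'; auto. }
  set (M := fun x => K x /\ C x).
  destruct (card_sub K M nK HnK (fun x Hx => proj1 Hx)) as [nM HnM].
  destruct HnM as [lM [HlMd [HlMl HlMm]]].
  set (P := fun q => exists m, M m /\ pi m = q).
  assert (HP : card P nM).
  { exists (map pi lM). split; [|split].
    - apply NoDup_map_NoDup_ForallPairs; [|auto].
      intros x y Hx Hy E. apply HlMm in Hx, Hy. apply Cinj; auto; [apply Hx|apply Hy].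
    - rewrite length_map; auto.
    - intro q. rewrite in_map_iff. unfold P. split.
      + intros [m [Hm <-]]. exists m; split; auto; apply HlMm; auto.
      + intros [m [<- Hm]]. exists m; split; auto; apply HlMm; auto. }
  assert (HPs : subgroup P).
  { split; [|split].
    - exists gone. split; auto. split; auto.
    - intros x y [m [[Hm1 Hm2] <-]] [m' [[Hm1' Hm2'] <-]]. exists (gmul m m'). split; auto. split; auto.
    - intros x [m [[Hm1 Hm2] <-]]. exists (ginv m). split; auto. split; auto. }
  assert (HPfin : finite_subgroup P) by (split; auto; exists nM; auto).
  destruct (HJ P HPfin) as [B [[HBs [HBP HBn]] [HBab [nP [nB [HnP [HnB Hidx]]]]]]].
  assert (nP = nM) by (eapply card_unique; eauto). subst nP.
  destruct HBs as [HB1 [HBm HBi]].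
  destruct HP as [lP [HlPd [HlPl HlPm]]].
  destruct HnB as [lB [HlBd [HlBl HlBm]]].
  destruct (lagrange B lB (conj HB1 (conj HBm HBi)) HlBd HlBm (length lP) lP (le_n _) HlPd) as [r [Hr1 Hr2]].
  { intros x b Hx Hb. apply HlPm. apply HlPm in Hx. destruct HPs as [_ [HPm _]]. apply HPm; auto. }
  assert (HnB0 : nB <> 0).
  { intro E. subst nB. destruct lB; [|discriminate]. apply HlBm in HB1. destruct HB1. }
  assert (Hrl : length r <= JQ).
  { rewrite HlPl, HlBl in Hr1. rewrite Hr1, Nat.mul_comm, Nat.div_mul in Hidx; auto. }
  assert (piconj : forall k m0 m, pi (gmul (gmul k (gmul (ginv m0) m)) (ginv k)) =
        gmul (ginv (pi (gmul (gmul k m0) (ginv k)))) (pi (gmul (gmul k m) (ginv k)))).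
  { intros. rewrite <- piV, <- Hhom. f_equal. gs. }
  assert (MK : forall k m, K k -> M m -> M (gmul (gmul k m) (ginv k))).
  { intros k m Hk [Hm1 Hm2]. split; auto. }
  set (Aks := fun ks0 m => M m /\ forall k', In k' ks0 -> B (pi (gmul (gmul k' m) (ginv k')))).
  assert (Count : forall ks0, (forall k', In k' ks0 -> K k') -> forall n, card (Aks ks0) n ->
            nM <= JQ ^ (length ks0) * n).
  { induction ks0 as [|k ks0 IH]; intros HK0 n Hn.
    - simpl. assert (card M n).
      { apply (card_ext (Aks [])); auto. intro x; unfold Aks; simpl; tauto. }
      assert (n = nM) by (eapply card_unique; [exact H0| exists lM; auto]). lia.
    - destruct (card_sub K (Aks ks0) nK HnK) as [n' Hn'].
      { intros x [[Hx _] _]; auto. }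
      assert (IH' := IH (fun k' Hk' => HK0 k' (or_intror Hk')) n' Hn').
      assert (Hk : K k) by (apply HK0; left; auto).
      assert (Hle : n' <= length r * n).
      { destruct Hn' as [s [Hsd [Hsl Hsm]]]. subst n'.
        apply (part r (fun m y => B (gmul (ginv y) (pi (gmul (gmul k m) (ginv k)))))); auto.
        - intros x Hx. apply Hsm in Hx. apply Hr2. apply HlPm. exists (gmul (gmul k x) (ginv k)).
          split; auto. apply MK; auto. apply Hx.
        - intros y Hy s' Hs' Hsub. destruct s' as [|m0 s0']; [simpl; lia|].
          destruct (Hsub m0 (or_introl eq_refl)) as [Hm0 Hy0]. apply Hsm in Hm0.
          apply (inj_card (m0 :: s0') (gmul (ginv m0)) (Aks (k :: ks0))); auto.
          + intros m Hm. destruct (Hsub m Hm) as [Hm1 Hy1]. apply Hsm in Hm1.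
            destruct Hm0 as [[Hm0K Hm0C] Hm0B]. destruct Hm1 as [[Hm1K Hm1C] Hm1B].
            split; [split; auto|].
            intros k' [->|Hk']; rewrite piconj.
            * replace (gmul (ginv (pi (gmul (gmul k' m0) (ginv k')))) (pi (gmul (gmul k' m) (ginv k'))))
                with (gmul (ginv (gmul (ginv y) (pi (gmul (gmul k' m0) (ginv k')))))
                           (gmul (ginv y) (pi (gmul (gmul k' m) (ginv k'))))) by gs.
              auto.
            * auto.
          + intros u v _ _ E. apply (f_equal (gmul m0)) in E. gs. }
      simpl length. rewrite Nat.pow_succ_r'.
      assert (n' <= JQ * n) by (eapply Nat.le_trans; [exact Hle| apply Nat.mul_le_mono_r; auto]).
      nia. }
  set (A := Aks ks).
  destruct (card_sub K A nK HnK) as [nA HnA].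
  { intros x [[Hx _] _]; auto. }
  assert (HcA := Count ks HksK nA HnA).
  assert (HKM : nK <= length ks * nM).
  { destruct HnK as [s [Hsd [Hsl Hsm]]]. subst nK.
    apply (part ks (fun k k' => C (gmul (ginv k') k))); auto.
    - intros x Hx. apply Cover, Hsm, Hx.
    - intros k' Hk' s' Hs' Hsub. apply (inj_card s' (gmul (ginv k')) M); auto.
      + intros x Hx. destruct (Hsub x Hx) as [Hx1 Hx2]. split; auto. apply Hsm in Hx1. auto.
      + intros u v _ _ E. apply (f_equal (gmul k')) in E. gs.
      + exists lM; auto. }
  assert (core : forall m, A m -> forall k, K k -> B (pi (gmul (gmul k m) (ginv k)))).
  { intros m [[HmK HmC] HmB] k Hk. destruct (Cover k Hk) as [k' [Hk' Hc]].
    assert (Hk'K : K k') by auto.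
    assert (Hd : M (gmul k (ginv k'))).
    { split; auto. replace (gmul k (ginv k')) with (gmul (gmul k (gmul (ginv k') k)) (ginv k)) by gs.
      apply Cconj; auto. }
    replace (pi (gmul (gmul k m) (ginv k))) with
      (gmul (gmul (pi (gmul k (ginv k'))) (pi (gmul (gmul k' m) (ginv k')))) (ginv (pi (gmul k (ginv k'))))).
    2:{ rewrite <- piV, <- !Hhom. f_equal. gs. }
    apply HBn; auto. exists (gmul k (ginv k')); auto. }
  assert (A1 : A gone).
  { split; [split; auto|]. intros k' _. replace (gmul (gmul k' gone) (ginv k')) with (@gone G) by gs.
    rewrite pi1; auto. }
  assert (AB : forall m, A m -> B (pi m)).
  { intros m Hm. pose proof (core m Hm gone HK1) as E. gs. }
  assert (AC : forall m, A m -> C m) by (intros m [[_ Hm] _]; auto).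
  exists A. split; [|split].
  - split; [split; [auto|split]|split].
    + intros x y [[HxK HxC] HxB] [[HyK HyC] HyB]. split; [split; auto|].
      intros k' Hk'. replace (pi (gmul (gmul k' (gmul x y)) (ginv k'))) with
        (gmul (pi (gmul (gmul k' x) (ginv k'))) (pi (gmul (gmul k' y) (ginv k')))).
      2:{ rewrite <- Hhom. f_equal. gs. }
      auto.
    + intros x [[HxK HxC] HxB]. split; [split; auto|].
      intros k' Hk'. replace (pi (gmul (gmul k' (ginv x)) (ginv k'))) with
        (ginv (pi (gmul (gmul k' x) (ginv k')))).
      2:{ rewrite <- piV. f_equal. gs. }
      auto.
    + intros x [[HxK _] _]; auto.
    + intros k x Hk Hx. split; [apply MK; auto; apply Hx|].
      intros k' Hk'. replace (gmul (gmul k' (gmul (gmul k x) (ginv k))) (ginv k')) with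
        (gmul (gmul (gmul k' k) x) (ginv (gmul k' k))) by gs.
      apply core; auto.
  - intros x y Hx Hy. apply Cinj; auto.
    rewrite !Hhom. apply HBab; auto.
  - exists nK, nA. split; [exact HnK|split; [exact HnA|]].
    apply Nat.div_le_upper_bound.
    + intro E. subst nA. destruct HnA as [[|? ?] [_ [Hl Hm]]]; [|discriminate].
      apply Hm in A1. destruct A1.
    + assert (JQ ^ length ks <= JQ ^ a) by (apply Nat.pow_le_mono_r; lia).
      assert (length ks <= a) by lia.
      apply (Nat.le_trans _ _ _ HKM).
      apply (Nat.le_trans _ (length ks * (JQ ^ length ks * nA))); [apply Nat.mul_le_mono_l; auto|].
      apply (Nat.le_trans _ (a * (JQ ^ a * nA))); [apply Nat.mul_le_mono; [auto|apply Nat.mul_le_mono_r; auto]|].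
      rewrite Nat.mul_assoc, Nat.mul_comm. apply Nat.le_refl.
Qed.

Theorem corollary1p21 (G Q : Group) (H : G -> Prop) (pi : G -> Q)
  (a JQ : nat) :
  finite_subgroup H -> normal_in H (fun _ => True) -> trivial_center H ->
  quotient_map H pi -> aut_card H a ->
  jordan_constant Q JQ ->
  jordan G /\ (forall JG, jordan_constant G JG -> JG <= a * Nat.pow JQ a).
Proof.
  intros H1 H2 H3 H4 H5 [H6 _].
  assert (Hj := jordan_main G Q H pi a JQ H1 H2 H3 H4 H5 H6).
  split; [exists (a * Nat.pow JQ a); exact Hj|].
  intros JG [_ Hmin]. apply Hmin; exact Hj.
Qed.
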